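(* Let $R$ be a ring and $a\in R$. Then $a$ is feckly clean if and only if there exists an element $e\in R$ such that $$V(a-1)\subseteq V(e)\subseteq \operatorname{Max}(R)\setminus V(a)\quad\text{and}\quad eR(1-e)\subseteq J(R).$$
   Context: Rings are associative with identity, not necessarily commutative; $J(R)$ is the Jacobson radical. An element $u\in R$ is full if $RuR=R$. An element $a\in R$ is feckly clean if there exist $e\in R$ and a full element $u\in R$ with $a=e+u$ and $eR(1-e)\subseteq J(R)$. $\operatorname{Max}(R)$ is the set of all maximal (two-sided) ideals of $R$. For an ideal $I$, $V(I)=\{P\in\operatorname{Max}(R): I\subseteq P\}$, and for $a\in R$, $V(a)=V(RaR)$. *)

(* Defs.v *)
(* Rings: pzRingType (associative, unital, possibly non-commutative,
   possibly the zero ring). Subsets of R are predicates R -> Prop. *)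
From HB Require Import structures.
From mathcomp Require Import all_boot all_order all_algebra.
Set Implicit Arguments. Unset Strict Implicit. Unset Printing Implicit Defensive.
Import GRing.Theory.
Local Open Scope ring_scope.

Section Defs.
Variable R : pzRingType.

Definition left_ideal (I : R -> Prop) : Prop :=
  I 0 /\ (forall x y, I x -> I y -> I (x + y)) /\ (forall r x, I x -> I (r * x)).

Definition ideal (I : R -> Prop) : Prop :=
  I 0 /\ (forall x y, I x -> I y -> I (x + y)) /\
  (forall r x, I x -> I (r * x)) /\ (forall r x, I x -> I (x * r)).

Definition max_left_ideal (M : R -> Prop) : Prop :=
  left_ideal M /\ ~ M 1 /\
  (forall I : R -> Prop, left_ideal I -> (forall x, M x -> I x) ->
     (forall x, I x <-> M x) \/ I 1).

Definition jacobson (x : R) : Prop :=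
  forall M : R -> Prop, max_left_ideal M -> M x.

Definition max_ideal (P : R -> Prop) : Prop :=
  ideal P /\ ~ P 1 /\
  (forall I : R -> Prop, ideal I -> (forall x, P x -> I x) ->
     (forall x, I x <-> P x) \/ I 1).

Definition RaR (a : R) (x : R) : Prop :=
  exists s : seq (R * R), x = \sum_(p <- s) p.1 * a * p.2.

Definition full (u : R) : Prop := forall x, RaR u x.

Definition corner_in_J (e : R) : Prop := forall r, jacobson (e * r * (1 - e)).

Definition feckly_clean (a : R) : Prop :=
  exists e u : R, a = e + u /\ full u /\ corner_in_J e.

Definition V (I : R -> Prop) (P : R -> Prop) : Prop :=
  max_ideal P /\ (forall x, I x -> P x).

Definition Velt (a : R) : (R -> Prop) -> Prop := V (RaR a).

End Defs.

(* Main.v *)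
Require Import Defs.
From HB Require Import structures.
From mathcomp Require Import all_boot all_order all_algebra.
From mathcomp Require Import boolp classical_sets.
Import GRing.Theory.
Local Open Scope ring_scope.
Lemma zorn_gen (R : Type) (one : R) (C : (R -> Prop) -> Prop) (I : R -> Prop) :
  (forall F : (R -> Prop) -> Prop, (exists X, F X) ->
     (forall X Y, F X -> F Y -> (forall x, X x -> Y x) \/ (forall x, Y x -> X x)) ->
     (forall X, F X -> C X) -> C (fun x => exists X, F X /\ X x)) ->
  C I -> ~ I one ->
  exists M, C M /\ (forall x, I x -> M x) /\ ~ M one /\
    (forall J, C J -> (forall x, M x -> J x) -> (forall x, J x <-> M x) \/ J one).
Proof.
move=> Hch CI nI1.
pose good X := C X /\ (forall x, I x -> X x) /\ ~ X one.
pose T := {X : R -> Prop | good X}.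
have gI : good I by split=> //; split.
pose t0 : T := exist _ I gI.
pose Rl (X Y : T) := `[< forall x, sval X x -> sval Y x >].
have [|||t tmax] := @ZL_preorder T t0 Rl.
- by move=> X; apply/asboolP.
- by move=> X Y Z /asboolP h1 /asboolP h2; apply/asboolP => x /h1 /h2.
- move=> A Atot.
  have [[t1 At1]|nA] := pselect (exists t, A t); last first.
    by exists t0 => s As; exfalso; apply: nA; exists s.
  pose U := fun x => exists X, (exists s : T, A s /\ sval s = X) /\ X x.
  have gU : good U.
    split; [|split].
    - apply: Hch.
      + by exists (sval t1); exists t1.
      + move=> X Y [s [As <-]] [s' [As' <-]].
        by case: (Atot s s' As As') => /asboolP h; [left|right].
      + by move=> X [s [_ <-]]; case: (svalP s).
    - by move=> x Ix; exists (sval t1); split; [exists t1|case: (svalP t1) => _ [h _]; exact: h].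
    - move=> [X [[s [As <-]] Xs]]; by case: (svalP s) => _ [_ ].
  exists (exist _ U gU) => s As; apply/asboolP => x sx /=.
  by exists (sval s); split => //; exists s.
exists (sval t); case: (svalP t) => Ct [It nt]; split=> //; split=> //; split=> //.
move=> J CJ tJ.
have [J1|nJ1] := pselect (J one); first by right.
left; have gJ : good J by split=> //; split=> // x /It /tJ.
have /asboolP h := tmax (exist _ J gJ) (introT (asboolP _) tJ).
by move=> x; split; [apply: h| apply: tJ].
Qed.

Lemma byc (Q : Prop) : (~ Q -> False) -> Q.
Proof. by move=> h; apply: (contra_notP (P:=False)). Qed.

Section L.
Variable R : pzRingType.
Implicit Types (a e x : R) (P : R -> Prop).

Lemma ideal_sub P x y : ideal P -> P x -> P y -> P (x - y).
Proof.
move=> [P0 [PD [PL PR]]] Px Py; apply: PD => //.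
by rewrite -mulN1r; apply: PL.
Qed.

Lemma RaR_in P a : ideal P -> P a -> forall x, RaR a x -> P x.
Proof.
move=> [P0 [PD [PL PR]]] Pa x [s ->]; elim: s => [|p s IH].
  by rewrite big_nil.
by rewrite big_cons; apply: PD => //; apply: PR; apply: PL.
Qed.

Lemma RaR_self a : RaR a a.
Proof. by exists [:: (1, 1)]; rewrite big_cons big_nil /= mul1r mulr1 addr0. Qed.

Lemma Velt_iff a P : Velt a P <-> max_ideal P /\ P a.
Proof.
split; first by move=> [mP h]; split => //; apply: h; apply: RaR_self.
move=> [mP Pa]; split => //; apply: RaR_in => //; exact: mP.1.
Qed.

Lemma RaR_ideal a : ideal (RaR a).
Proof.
split; [|split; [|split]].
- by exists [::]; rewrite big_nil.
- move=> x y [s ->] [t ->]; exists (s ++ t); by rewrite big_cat.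
- move=> r x [s ->]; exists (map (fun p => (r * p.1, p.2)) s).
  rewrite big_map big_distrr /=; apply: eq_bigr => p _; by rewrite !mulrA.
- move=> r x [s ->]; exists (map (fun p => (p.1, p.2 * r)) s).
  rewrite big_map big_distrl /=; apply: eq_bigr => p _; by rewrite !mulrA.
Qed.

Lemma chain_ideal : forall F : (R -> Prop) -> Prop, (exists X, F X) ->
     (forall X Y, F X -> F Y -> (forall x, X x -> Y x) \/ (forall x, Y x -> X x)) ->
     (forall X, F X -> ideal X) -> ideal (fun x => exists X, F X /\ X x).
Proof.
move=> F [X0 FX0] tot hC; split; [|split; [|split]].
- by exists X0; split => //; case: (hC _ FX0).
- move=> x y [X [FX Xx]] [Y [FY Yy]].
  case: (tot _ _ FX FY) => h.
  + exists Y; split => //; case: (hC _ FY) => _ [HD _]; apply: HD => //; exact: h.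
  + exists X; split => //; case: (hC _ FX) => _ [HD _]; apply: HD => //; exact: h.
- move=> r x [X [FX Xx]]; exists X; split => //; case: (hC _ FX) => _ [_ [HL _]]; exact: HL.
- move=> r x [X [FX Xx]]; exists X; split => //; case: (hC _ FX) => _ [_ [_ HR]]; exact: HR.
Qed.

Lemma chain_left_ideal : forall F : (R -> Prop) -> Prop, (exists X, F X) ->
     (forall X Y, F X -> F Y -> (forall x, X x -> Y x) \/ (forall x, Y x -> X x)) ->
     (forall X, F X -> left_ideal X) -> left_ideal (fun x => exists X, F X /\ X x).
Proof.
move=> F [X0 FX0] tot hC; split; [|split].
- by exists X0; split => //; case: (hC _ FX0).
- move=> x y [X [FX Xx]] [Y [FY Yy]].
  case: (tot _ _ FX FY) => h.
  + exists Y; split => //; case: (hC _ FY) => _ [HD _]; apply: HD => //; exact: h.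
  + exists X; split => //; case: (hC _ FX) => _ [HD _]; apply: HD => //; exact: h.
- move=> r x [X [FX Xx]]; exists X; split => //; case: (hC _ FX) => _ [_ HL]; exact: HL.
Qed.

Lemma exists_max_left (I : R -> Prop) : left_ideal I -> ~ I 1 ->
  exists M, max_left_ideal M /\ forall x, I x -> M x.
Proof.
move=> LI nI1; have [M [CM [IM [nM1 mM]]]] := @zorn_gen R 1 (@left_ideal R) I chain_left_ideal LI nI1.
by exists M; split => //; split => //; split.
Qed.

Lemma exists_max (I : R -> Prop) : ideal I -> ~ I 1 ->
  exists M, max_ideal M /\ forall x, I x -> M x.
Proof.
move=> LI nI1; have [M [CM [IM [nM1 mM]]]] := @zorn_gen R 1 (@ideal R) I chain_ideal LI nI1.
by exists M; split => //; split => //; split.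
Qed.

Lemma jac_unit x y : jacobson x -> exists z, z * (1 - y * x) = 1.
Proof.
move=> Jx; apply: byc => nK.
pose K z := exists w, z = w * (1 - y * x).
have LK : left_ideal K.
  split; [|split].
  - by exists 0; rewrite mul0r.
  - by move=> a b [w1 ->] [w2 ->]; exists (w1 + w2); rewrite mulrDl.
  - by move=> r a [w ->]; exists (r * w); rewrite mulrA.
have nK1 : ~ K 1 by move=> [w h]; apply: nK; exists w.
have [M [mM KM]] := exists_max_left K LK nK1.
have Mx := Jx M mM.
case: mM => [[M0 [MD ML]] [nM1 _]]; apply: nM1.
have -> : (1 : R) = (1 - y * x) + y * x by rewrite subrK.
apply: MD; first by apply: KM; exists 1; rewrite mul1r.
exact: ML.
Qed.

Lemma jac_max P x : max_ideal P -> jacobson x -> P x.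
Proof.
move=> [IP [nP1 mP]] Jx.
have LP : left_ideal P by case: IP => [P0 [PD [PL _]]]; split => //; split.
have [M [mM PM]] := exists_max_left P LP nP1.
have Mx := Jx M mM.
case: (mM) => [[M0 [MD ML]] [nM1 mM']].
pose A y := forall r, M (y * r).
have IA : ideal A.
  split; [|split; [|split]].
  - by move=> r; rewrite mul0r.
  - by move=> a b Ha Hb r; rewrite mulrDl; apply: MD.
  - by move=> s a Ha r; rewrite -mulrA; apply: ML.
  - by move=> s a Ha r; rewrite -mulrA; apply: Ha.
have PA : forall y, P y -> A y.
  by move=> y Py r; apply: PM; case: IP => [_ [_ [_ PR]]]; apply: PR.
have Ax : A x.
  move=> r; apply: byc => nMxr.
  pose L z := exists y m, M m /\ z = y * (x * r) + m.
  have LL : left_ideal L.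
    split; [|split].
    - by exists 0, 0; split => //; rewrite mul0r addr0.
    - move=> a b [y1 [m1 [Mm1 ->]]] [y2 [m2 [Mm2 ->]]].
      exists (y1 + y2), (m1 + m2); split; first by apply: MD.
      by rewrite mulrDl addrACA.
    - move=> s a [y1 [m1 [Mm1 ->]]]; exists (s * y1), (s * m1); split; first by apply: ML.
      by rewrite mulrDr mulrA.
  have ML' : forall z, M z -> L z by move=> z Mz; exists 0, z; rewrite mul0r add0r.
  case: (mM' L LL ML') => [h|L1].
    by apply: nMxr; apply/h; exists 1, 0; rewrite mul1r addr0.
  have [y [m [Mm hr]]] : L r by case: LL => _ [_ HL]; rewrite -(mulr1 r); apply: HL.
  have [z hz] := jac_unit x y Jx.
  have Mr : M r.
    have -> : r = z * m.
      have -> : m = (1 - y * x) * r by rewrite mulrBl mul1r -mulrA {1}hr (addrC (y * (x * r))) addrK.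
      by rewrite mulrA hz mul1r.
    by apply: ML.
  by apply: nMxr; apply: ML.
have nA1 : ~ A 1 by move=> h; apply: nM1; have := h 1; rewrite mulr1.
case: (mP A IA PA) => [h|//]; by apply/h.
Qed.

Lemma dich P e : max_ideal P -> corner_in_J e -> P e \/ P (1 - e).
Proof.
move=> mP cJ.
have Pc : forall r, P (e * r * (1 - e)) by move=> r; apply: jac_max => //; apply: cJ.
case: (mP) => [[P0 [PD [PL PR]]] [nP1 mP']].
pose A y := forall r, P (y * r * (1 - e)).
have IA : ideal A.
  split; [|split; [|split]].
  - by move=> r; rewrite !mul0r.
  - by move=> a b Ha Hb r; rewrite !mulrDl; apply: PD.
  - by move=> s a Ha r; rewrite -!mulrA; apply: PL; rewrite !mulrA.
  - by move=> s a Ha r; rewrite -(mulrA a); apply: Ha.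
have PA : forall y, P y -> A y.
  move=> y Py r; apply: (PR _ _ (PR _ _ Py)).
case: (mP' A IA PA) => [h|A1]; first by left; apply/h.
by right; have := A1 1; rewrite !mul1r.
Qed.

End L.
Arguments dich {R P e}.
Arguments Velt_iff {R}.
Arguments RaR_in {R P a}.
Arguments ideal_sub {R P x y}.
Arguments RaR_self {R}.
Arguments RaR_ideal {R}.
Arguments exists_max {R}.

Theorem lemma2p2 (R : pzRingType) (a : R) :
  feckly_clean a <->
  exists e : R,
    (forall P : R -> Prop, Velt (a - 1) P -> Velt e P) /\
    (forall P : R -> Prop, Velt e P -> max_ideal P /\ ~ Velt a P) /\
    corner_in_J e.
Proof.
split.
- move=> [e [u [-> [fu cJ]]]]; exists e; split; [|split] => //.
  + move=> P /Velt_iff [mP Pa1]; apply/Velt_iff; split => //.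
    case: (dich mP cJ) => // P1e; exfalso.
    case: (mP) => IP [nP1 _]; apply: nP1.
    have Pu : P u.
      have -> : u = (e + u - 1) + (1 - e) by rewrite addrA subrK addrC addKr.
      by case: IP => _ [PD _]; apply: PD.
    exact: (RaR_in IP Pu 1 (fu 1)).
  + move=> P /Velt_iff [mP Pe]; split => // /Velt_iff [_ Pa].
    case: (mP) => IP [nP1 _]; apply: nP1.
    have Pu : P u by have := ideal_sub IP Pa Pe; rewrite addrC addKr.
    exact: (RaR_in IP Pu 1 (fu 1)).
- move=> [e [h1 [h2 cJ]]]; exists e, (a - e); split; first by rewrite addrC subrK.
  split => //.
  move=> x; apply: byc => nx.
  have n1 : ~ RaR (a - e) 1.
    move=> h; apply: nx; rewrite -(mulr1 x).
    by case: (RaR_ideal (a - e)) => _ [_ [HL _]]; apply: HL.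
  have [P [mP sub]] := exists_max _ (RaR_ideal (a - e)) n1.
  have Pae := sub _ (RaR_self (a - e)).
  case: (mP) => IP _.
  have Pe : P e.
    case: (dich mP cJ) => // P1e.
    have Pa1 : P (a - 1).
      by have := ideal_sub IP Pae P1e; rewrite opprB addrA subrK.
    by have /Velt_iff [_ ] := h1 P (proj2 (Velt_iff _ _) (conj mP Pa1)).
  have [_ nVa] := h2 P (proj2 (Velt_iff _ _) (conj mP Pe)).
  apply: nVa; apply/Velt_iff; split => //.
  have -> : a = (a - e) + e by rewrite subrK.
  by case: IP => _ [PD _]; apply: PD.
Qed.
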